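(* Let $w:\mathbb R^+\times\mathbb R\to\mathbb R^n$ and $f:\mathbb R^n\to\mathbb R^n$ (smooth) define the system of conservation laws $\partial_t w+\partial_x f(w)=0$, where $w=(w_1,w_2)$ with $w_1\in\mathbb R^l$, $w_2\in\mathbb R^{n-l}$, and $f=(0,f_2)$ with $f_2\in\mathbb R^{n-l}$. Assume that $\eta(w)$ is a (smooth) function which is strictly convex with respect to $w_2$ at fixed $w_1$ and such that $\partial_t\eta(w)=0$ for smooth solutions, and that $\nabla_{w_1}f_2(w)=0$. Then the system is hyperbolic.
   Context: Hyperbolic means that for every state $w$ the Jacobian matrix $\nabla_w f(w)$ is diagonalizable with real eigenvalues. *)

(* Defs.v *)
From HB Require Import structures.
From mathcomp Require Import all_boot all_order all_algebra.
From mathcomp Require Import all_classical all_reals all_analysis.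
Set Implicit Arguments. Unset Strict Implicit. Unset Printing Implicit Defensive.
Import Order.TTheory GRing.Theory Num.Theory.
Import numFieldNormedType.Exports.
Local Open Scope ring_scope.

Section Defs.
Variable R : realType.

Definition basisv (n : nat) (j : 'I_n) : 'rV[R]_n := delta_mx 0 j.

Definition iter_derive (V W : normedModType R) (s : seq V) (f : V -> W) : V -> W :=
  foldr (fun v g => fun x => derive g x v) f s.

Definition smooth (V W : normedModType R) (f : V -> W) : Prop :=
  forall (s : seq V) (x : V), differentiable (iter_derive s f) x.

Definition jac (n p : nat) (f : 'rV[R]_n -> 'rV[R]_p) (w : 'rV[R]_n)
  : 'M[R]_(p, n) :=
  \matrix_(i < p, j < n) (derive f w (basisv j)) 0 i.

Definition gradient (n : nat) (eta : 'rV[R]_n -> R) (w : 'rV[R]_n) : 'rV[R]_n :=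
  \row_(j < n) derive eta w (basisv j).

Definition hessian (n : nat) (eta : 'rV[R]_n -> R) (w : 'rV[R]_n) : 'M[R]_n :=
  \matrix_(i < n, j < n)
     derive (fun x => derive eta x (basisv j)) w (basisv i).

Definition hessian2 (l m : nat) (eta : 'rV[R]_(l + m) -> R) (w : 'rV[R]_(l + m))
  : 'M[R]_m :=
  \matrix_(i < m, j < m) hessian eta w (rshift l i) (rshift l j).

(* eta strictly convex w.r.t. w2 at fixed w1 (read as: positive definite
   Hessian in the w2 variables) *)
Definition strictly_convex_w2 (l m : nat) (eta : 'rV[R]_(l + m) -> R) : Prop :=
  forall (w : 'rV[R]_(l + m)) (v : 'rV[R]_m), v != 0 ->
    0 < (v *m hessian2 eta w *m v^T) 0 0.

(* the system d_t w + d_x f(w) = 0 is hyperbolic: for every state w the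
   Jacobian is diagonalizable over R (i.e. with real eigenvalues) *)
Definition hyperbolic (n : nat) (f : 'rV[R]_n -> 'rV[R]_n) : Prop :=
  forall w : 'rV[R]_n, diagonalizable (jac f w).

End Defs.

Arguments basisv {R n}.
Arguments smooth {R V W}.
Arguments jac {R n p}.
Arguments gradient {R n}.
Arguments hessian {R n}.
Arguments hessian2 {R l m}.
Arguments strictly_convex_w2 {R l m}.
Arguments hyperbolic {R n}.

(* Main.v *)
Require Import Defs.
From HB Require Import structures.
From mathcomp Require Import all_boot all_order all_algebra.
From mathcomp Require Import all_classical all_reals all_analysis.
From mathcomp Require Import ring lra.
From mathcomp Require Import complex.
Import Order.TTheory GRing.Theory Num.Theory.
Import numFieldNormedType.Exports.
Local Open Scope ring_scope.

Section LA.
Local Open Scope sesquilinear_scope.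
Variable R : rcfType.
Local Notation C := (R[i]).
Local Notation toC := (real_complex R).

Definition posdef {n} (H : 'M[R]_n) :=
  forall v : 'rV[R]_n, v != 0 -> 0 < (v *m H *m v^T) 0 0.

Lemma sumsq_gt0 n (v : 'rV[R]_n) : v != 0 -> 0 < (v *m v^T) 0 0.
Proof.
move=> nz.
have : ~~ [forall j, v 0 j == 0].
  apply: contra nz => /forallP h; apply/eqP/rowP => j; rewrite mxE; exact/eqP/h.
move=> /forallPn [j hj].
rewrite mxE (bigD1 j) //= mxE ltr_pwDl //.
  by rewrite lt0r mulf_neq0 //= -expr2 sqr_ge0.
by apply: sumr_ge0 => i _; rewrite mxE -expr2 sqr_ge0.
Qed.

Lemma posdef_eig n (H : 'M[R]_n) r : posdef H -> @eigenvalue R n H r -> 0 < r.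
Proof.
move=> pH /eigenvalueP [v vH nz].
have := pH v nz; rewrite vH -scalemxAl mxE.
by rewrite pmulr_lgt0 // sumsq_gt0.
Qed.

Lemma toC_real (x : R) : toC x \is Num.real.
Proof. by apply/complex_realP; exists x. Qed.

Lemma conj_toC (x : R) : (toC x)^* = toC x.
Proof. exact/conj_Creal/toC_real. Qed.


Lemma row_unit_neq0 n (U : 'M[C]_n) i : U \in unitmx -> row i U != 0.
Proof.
move=> Uu; apply/eqP => h.
have : row i (U *m invmx U) = row i 1%:M by rewrite mulmxV.
rewrite row_mul h mul0mx row1 => /rowP /(_ i); rewrite !mxE eqxx /=.
by rewrite eqxx => /eqP; rewrite eq_sym oner_eq0.
Qed.

Lemma sym_diag n (A H : 'M[R]_n) : H^T = H -> posdef H -> (H *m A)^T = H *m A ->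
  diagonalizable A.
Proof.
case: n A H => [|n] A H Hsym Hpos HAsym.
  exists 1%:M; first exact: unitmx1.
  by apply/is_diag_mxP => -[].
set HC := map_mx toC H; set AC := map_mx toC A.
have HCh : HC \is hermsymmx.
  apply/is_hermitianmxP; rewrite expr0 scale1r.
  apply/matrixP => i j; rewrite !mxE conj_toC.
  by rewrite -[in LHS]Hsym mxE.
have := orthomx_spectralP (hermitian_normalmx HCh).
set U := spectralmx HC; set d := spectral_diag HC => HCe.
have Uu : U \in unitmx := spectral_unit HC.
have Uun : U \is unitarymx := spectral_unitarymx HC.
have dreal := hermitian_spectral_diag_real HCh; rewrite -/d in dreal.
pose r i := complex.Re (d 0 i).
have dE i : d 0 i = toC (r i).
  by rewrite /r RRe_real //; exact: (mxOverP dreal).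
have rpos i : 0 < r i.
  apply: posdef_eig Hpos _; rewrite -(eigenvalue_map toC).
  suff : @eigenvalue _ _ HC (d 0 i) by rewrite dE.
  apply/eigenvalueP; exists (row i U); last exact: row_unit_neq0.
  have -> : row i U *m HC = row i (U *m HC) by rewrite row_mul.
  rewrite HCe !mulmxA mulmxV // mul1mx.
  by rewrite mul_diag_mx; apply/rowP => j; rewrite !mxE.
pose s := \row_i toC (Num.sqrt (r i)).
pose S := diag_mx s *m U.
have sC : (diag_mx s) ^t* = diag_mx s.
  apply/matrixP => i j; rewrite !mxE eq_sym; case: eqP => [->|_]; rewrite ?mulr1n ?mulr0n ?conj_toC ?conjC0 //.
have ss : diag_mx s *m diag_mx s = diag_mx d.
  rewrite mulmx_diag; congr diag_mx; apply/rowP => j.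
  by rewrite !mxE -rmorphM -expr2 sqr_sqrtr ?ltW // dE.
have St : S ^t* *m S = HC.
  rewrite /S trmx_mul map_mxM sC -invmx_unitary // !mulmxA -(mulmxA _ (diag_mx s) (diag_mx s)) ss.
  by rewrite HCe.
have Su : S \in unitmx.
  rewrite unitmx_mul Uu andbT unitmxE det_diag unitfE; apply/prodf_neq0 => i _.
  by rewrite mxE fmorph_eq0 sqrtr_eq0 -ltNge rpos.
have Tu : S ^t* \in unitmx by rewrite map_unitmx unitmx_tr.
have key : AC^T *m HC = HC *m AC.
  have := congr1 (map_mx toC) HAsym.
  by rewrite trmx_mul Hsym !map_mxM map_trmx.
have ACt : AC ^t* = AC^T.
  by apply/matrixP => i j; rewrite !mxE conj_toC.
clearbody S.
have E : invmx (S ^t*) *m (AC^T *m S ^t*) *m S = S *m AC.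
  by rewrite -!mulmxA St key -St -!mulmxA mulKmx.
pose B := S *m AC *m invmx S.
have Bh : B \is hermsymmx.
  apply/is_hermitianmxP; rewrite expr0 scale1r.
  rewrite /B !trmx_mul !map_mxM ACt trmx_inv map_invmx.
  by rewrite -E mulmxK.
have := orthomx_spectralP (hermitian_normalmx Bh).
set V := spectralmx B; set e := spectral_diag B => Be.
have Vu : V \in unitmx := spectral_unit B.
have ereal := hermitian_spectral_diag_real Bh; rewrite -/e in ereal.
have VSu : V *m S \in unitmx by rewrite unitmx_mul Vu Su.
have ACe : AC = conjmx (invmx (V *m S)) (diag_mx e).
  have SA : S *m AC = B *m S by rewrite /B mulmxKV.
  have h : V *m S *m AC = diag_mx e *m (V *m S).
    by rewrite -mulmxA SA {1}Be !mulmxA mulmxV // mul1mx.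
  by rewrite conjVmx // -mulmxA -h mulmxA mulVmx // mul1mx.
apply/diagonalizableP.
exists (undup [seq complex.Re (e 0 i) | i <- enum 'I_n.+1]); first exact: undup_uniq.
rewrite -(dvdp_map toC) -mxminpoly_map -/AC ACe mxminpoly_uconj ?unitmx_inv //.
rewrite mxminpoly_diag map_prod_XsubC.
apply: uniq_roots_dvdp; last by rewrite uniq_rootsE undup_uniq.
apply/allP => x; rewrite mem_undup => /mapP [i _ ->].
rewrite -(big_map toC predT (fun y => 'X - y%:P)) root_prod_XsubC.
apply/mapP; exists (complex.Re (e 0 i)).
  by rewrite mem_undup; apply/mapP; exists i; rewrite ?mem_enum.
by rewrite RRe_real //; exact: (mxOverP ereal).
Qed.

End LA.

Section AN.
Context {R : realType} {V : normedModType R}.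

Lemma line_is_derive (g : V -> R) p u s :
  derivable g (p + s *: u) u ->
  is_derive s 1 (fun t => g (p + t *: u)) ('D_u g (p + s *: u)).
Proof.
move=> dg.
have E : (fun h : R => h^-1 *: (((fun t => g (p + t *: u)) \o shift s) (h *: 1)
            - g (p + s *: u))) =
         (fun h : R => h^-1 *: ((g \o shift (p + s *: u)) (h *: u) - g (p + s *: u))).
  apply/funext => h /=; congr (_ *: (g _ - _)).
  by rewrite scalerDl -[h%:A]/(h * 1) mulr1 addrCA.
by split; rewrite /derivable /derive E.
Qed.


Lemma mvt (phi dphi : R -> R) (a b : R) : a < b ->
  (forall x : R, is_derive x (1 : R) phi (dphi x)) ->
  exists2 c, a < c < b & phi b - phi a = dphi c * (b - a).
Proof.
move=> ab hd.
have [c cab ->] := MVT ab (fun x _ => hd x) (continuous_subspaceT (fun x =>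
  differentiable_continuous ((derivable1_diffP phi x).1 (@ex_derive _ _ _ _ _ _ _ (hd x))))).
by exists c => //; move: cab; rewrite in_itv.
Qed.

Lemma claim (g : V -> R) x u v t : 0 < t ->
  (forall y, derivable g y u) -> (forall y, derivable ('D_u g) y v) ->
  exists sig, exists tau, [/\ 0 < sig < t, 0 < tau < t &
    g (x + t *: u + t *: v) - g (x + t *: u) - g (x + t *: v) + g x =
    t ^+ 2 * 'D_v ('D_u g) (x + sig *: u + tau *: v)].
Proof.
move=> t0 dgu dguv.
pose phi s := g (x + t *: v + s *: u) - g (x + s *: u).
pose dphi s := 'D_u g (x + t *: v + s *: u) - 'D_u g (x + s *: u).
have hphi (s : R) : is_derive s (1 : R) phi (dphi s).
  exact: is_deriveB (line_is_derive _ _ _ _ (dgu _)) (line_is_derive _ _ _ _ (dgu _)).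
have [sig sigt Es] := @mvt phi dphi 0 t t0 hphi.
pose psi r := 'D_u g (x + sig *: u + r *: v).
have hpsi (r : R) : is_derive r (1:R) psi ('D_v ('D_u g) (x + sig *: u + r *: v)).
  exact: line_is_derive _ _ _ _ (dguv _).
have [tau taut Et] := @mvt psi _ 0 t t0 hpsi.
exists sig, tau; split => //.
move: Es Et; rewrite /phi /dphi /psi !scale0r !addr0 !subr0 => Es Et.
have -> : g (x + t *: u + t *: v) - g (x + t *: u) - g (x + t *: v) + g x =
   g (x + t *: v + t *: u) - g (x + t *: u) - (g (x + t *: v) - g x).
  rewrite [x + t *: v + t *: u]addrAC. ring.
rewrite Es [x + t *: v + _]addrAC Et.
ring.
Qed.


Lemma small_ball (x u v : V) (d t a b : R) : t * (`|u| + `|v|) < d ->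
  0 < a < t -> 0 < b < t -> `|x - (x + a *: u + b *: v)| < d.
Proof.
move=> td /andP[a0 aT] /andP[b0 bT].
rewrite -addrA opprD addrA subrr add0r normrN.
apply: (le_lt_trans (ler_normD _ _)); rewrite !normrZ !gtr0_norm //.
apply: (le_lt_trans _ td); rewrite mulrDr.
by apply: lerD; rewrite ler_wpM2r // ltW.
Qed.

Arguments small_ball x {u v d t a b}.

Lemma schwarz (g : V -> R) u v x :
  (forall y, differentiable g y) ->
  (forall y, differentiable ('D_u g) y) -> (forall y, differentiable ('D_v g) y) ->
  (forall y, differentiable ('D_v ('D_u g)) y) ->
  (forall y, differentiable ('D_u ('D_v g)) y) ->
  'D_v ('D_u g) x = 'D_u ('D_v g) x.
Proof.
move=> dg dgu dgv dguv dgvu.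
apply/eqP; rewrite -subr_eq0 -normr_le0; apply/ler_addgt0Pr => e e0; rewrite add0r.
have e20 : 0 < e / 2 by rewrite divr_gt0.
have c1 := differentiable_continuous (dguv x).
have c1' : \forall y \near x, `|'D_v ('D_u g) x - 'D_v ('D_u g) y| < e / 2.
  by move/cvgrPdist_lt: c1; apply.
have c2 := differentiable_continuous (dgvu x).
have c2' : \forall y \near x, `|'D_u ('D_v g) x - 'D_u ('D_v g) y| < e / 2.
  by move/cvgrPdist_lt: c2; apply.
have N : \forall y \near x, `|'D_v ('D_u g) x - 'D_v ('D_u g) y| < e / 2 /\
                           `|'D_u ('D_v g) x - 'D_u ('D_v g) y| < e / 2.
  by apply: filterS2 c1' c2' => y.
move/nbhs_normP: N => [d /= d0 Hd].
have K0 : 0 < `|u| + `|v| + 1 by rewrite ltr_wpDl // addr_ge0.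
pose t := d / (`|u| + `|v| + 1).
have t0 : 0 < t by rewrite divr_gt0.
have tuv : t * (`|u| + `|v|) < d.
  rewrite /t mulrAC ltr_pdivrMr // ltr_pM2l // ltrDl //.
have tvu : t * (`|v| + `|u|) < d by rewrite addrC.
have [s1 [t1 [s1t t1t E1]]] := @claim g x u v t t0 (fun y => diff_derivable (dg y))
   (fun y => diff_derivable (dgu y)).
have [s2 [t2 [s2t t2t E2]]] := @claim g x v u t t0 (fun y => diff_derivable (dg y))
   (fun y => diff_derivable (dgv y)).
have E : 'D_v ('D_u g) (x + s1 *: u + t1 *: v) = 'D_u ('D_v g) (x + s2 *: v + t2 *: u).
  apply: (mulfI (_ : t ^+ 2 != 0)); first by rewrite expf_neq0 // gt_eqF.
  rewrite -E1 -E2 [x + t *: v + t *: u]addrAC; ring.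
have B1 : `|x - (x + s1 *: u + t1 *: v)| < d := small_ball x tuv s1t t1t.
have B2 : `|x - (x + s2 *: v + t2 *: u)| < d := small_ball x tvu s2t t2t.
have [h1 _] := Hd _ B1.
have [_ h2] := Hd _ B2.
have -> : 'D_v ('D_u g) x - 'D_u ('D_v g) x =
  ('D_v ('D_u g) x - 'D_v ('D_u g) (x + s1 *: u + t1 *: v)) +
  ('D_u ('D_v g) (x + s2 *: v + t2 *: u) - 'D_u ('D_v g) x).
  by rewrite E addrA subrK.
have h2' : `|'D_u ('D_v g) (x + s2 *: v + t2 *: u) - 'D_u ('D_v g) x| < e / 2.
  by rewrite distrC.
have H := lerD (ltW h1) (ltW h2'); rewrite -splitr in H.
exact: le_trans (ler_normD _ _) H.
Qed.

End AN.

Section Main.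
Context {R : realType}.

Lemma iter_derive_coord {V : normedModType R} p q (F : V -> 'M[R]_(p, q)) i j :
  smooth F -> forall s,
  iter_derive s (fun x => F x i j) = fun x => iter_derive s F x i j.
Proof.
move=> sF; elim => [//|v s IH] /=.
rewrite IH; apply/funext => x.
by rewrite derive_mx ?mxE //; exact: diff_derivable (sF s x).
Qed.

Lemma smooth_coord {V : normedModType R} p q (F : V -> 'M[R]_(p, q)) i j :
  smooth F -> smooth (fun x => F x i j).
Proof.
move=> sF s x; rewrite iter_derive_coord //.
exact: (differentiable_comp (sF s x) (differentiable_coord _ i j)).
Qed.

Lemma smooth_diff {V W : normedModType R} (g : V -> W) x : smooth g -> differentiable g x.
Proof. by move=> sg; exact: (sg [::] x). Qed.

Lemma smooth_D {V W : normedModType R} (g : V -> W) u : smooth g -> smooth ('D_u g).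
Proof.
move=> sg s x; have := sg (rcons s u) x.
by rewrite /iter_derive -cats1 foldr_cat.
Qed.

Lemma schwarz_smooth {V : normedModType R} (g : V -> R) u v x :
  smooth g -> 'D_v ('D_u g) x = 'D_u ('D_v g) x.
Proof.
move=> sg; apply: schwarz => y; apply: smooth_diff => //; do ?apply: smooth_D => //.
Qed.

End Main.

Theorem lemma3p1 (R : realType) (l m : nat)
    (f2 : 'rV[R]_(l + m) -> 'rV[R]_m) (eta : 'rV[R]_(l + m) -> R) :
  smooth f2 ->
  smooth eta ->
  strictly_convex_w2 eta ->
  (forall w : 'rV[R]_(l + m),
      gradient eta w *m jac (fun x => row_mx (0 : 'rV[R]_l) (f2 x)) w = 0) ->
  (forall (w : 'rV[R]_(l + m)) (j : 'I_l), derive f2 w (basisv (lshift m j)) = 0) ->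
  hyperbolic (fun x => row_mx (0 : 'rV[R]_l) (f2 x)).
Proof.
move=> sf2 seta hconv hgrad hw1.
set f := fun x => row_mx (0 : 'rV[R]_l) (f2 x).
pose g (i : 'I_m) : 'rV[R]_(l + m) -> R := fun x => f2 x 0 i.
have sg i : smooth (g i) by exact: smooth_coord.
have df2 x v : derivable f2 x v by exact: diff_derivable (sf2 [::] x).
have f0 a k : (fun y => f y a (lshift m k)) = cst 0.
  by apply/funext => y; rewrite /f row_mxEl mxE.
have f1 a k : (fun y => f y a (rshift l k)) = (fun y => f2 y a k).
  by apply/funext => y; rewrite /f row_mxEr.
have df x v : derivable f x v.
  apply/derivable_mxP => a b; case: (split_ordP b) => k ->.
    by rewrite f0; exact: derivable_cst.
  by rewrite f1; exact: (derivable_mxP _ _ _).1 (df2 x v) a k.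
have jacE x i j : jac f x i j = 'D_(basisv j) (fun y => f y 0 i) x.
  by rewrite /jac mxE derive_mx // mxE.
have jacL x a j : jac f x (lshift m a) j = 0.
  by rewrite jacE f0 derive_cst.
have jacR x b j : jac f x (rshift l b) j = 'D_(basisv j) (g b) x.
  by rewrite jacE f1.
have gD x b j : 'D_(basisv j) (g b) x = derive f2 x (basisv j) 0 b.
  by rewrite derive_mx // mxE.
rewrite -/f in hgrad.
have Gid x j : \sum_(i < m) 'D_(basisv (rshift l i)) eta x *
     'D_(basisv (rshift l j)) (g i) x = 0.
  have := congr1 (fun M : 'M[R]_(1, l + m) => M 0 (rshift l j)) (hgrad x).
  rewrite !mxE big_split_ord /= big1 ?add0r; last by move=> i _; rewrite jacL mulr0.
  by move=> H; rewrite -[in RHS]H; apply: eq_bigr => i _; rewrite jacR mxE.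
move=> w.
pose G (i : 'I_m) := 'D_(basisv (rshift l i)) eta.
pose F (i j : 'I_m) := 'D_(basisv (rshift l j)) (g i).
have sG i : smooth (G i) by exact: smooth_D.
have sF i j : smooth (F i j) by exact: smooth_D.
have Did k j : \sum_(i < m) (G i w * 'D_(basisv (rshift l k)) (F i j) w +
                             F i j w * 'D_(basisv (rshift l k)) (G i) w) = 0.
  have E : (\sum_(i < m) (G i * F i j)) = cst 0.
    by rewrite fct_sumE; apply/funext => x /=; exact: Gid x j.
  have := derive_cst (0:R) w (basisv (rshift l k)).
  rewrite -E derive_sum; last first.
    by move=> i; apply: derivableM; apply: diff_derivable; apply: smooth_diff.
  move=> H; rewrite -[in RHS]H; apply: eq_bigr => i _.
  by rewrite deriveM //; apply: diff_derivable; apply: smooth_diff.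
set H2 := hessian2 eta w.
pose A := \matrix_(i < m, j < m) F i j w.
have H2E k i : H2 k i = 'D_(basisv (rshift l k)) (G i) w by rewrite /H2 /hessian2 /hessian !mxE.
have HA k j : (H2 *m A) k j =
    - \sum_(i < m) G i w * 'D_(basisv (rshift l j)) ('D_(basisv (rshift l k)) (g i)) w.
  have := Did k j; rewrite big_split /= => /eqP; rewrite addrC addr_eq0 => /eqP E.
  rewrite mxE.
  have -> : \sum_(i < m) H2 k i * A i j =
            \sum_(i < m) F i j w * 'D_(basisv (rshift l k)) (G i) w.
    by apply: eq_bigr => i _; rewrite H2E mxE mulrC.
  apply: (eq_trans E); apply/eqP; rewrite eqr_opp; apply/eqP.
  apply: eq_bigr => i _; rewrite /F.
  by rewrite (schwarz_smooth (g i) (basisv (rshift l j)) (basisv (rshift l k)) w (sg i)).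
have HAsym : (H2 *m A)^T = H2 *m A.
  apply/matrixP => k j; rewrite [LHS]mxE !HA; apply/eqP; rewrite eqr_opp; apply/eqP.
  apply: eq_bigr => i _.
  by rewrite (schwarz_smooth (g i) (basisv (rshift l j)) (basisv (rshift l k)) w (sg i)).
have H2sym : H2^T = H2.
  apply/matrixP => k j; rewrite mxE !H2E /G.
  by rewrite (schwarz_smooth eta (basisv (rshift l j)) (basisv (rshift l k)) w seta).
have J : jac f w = block_mx 0 0 0 A.
  apply/matrixP => i j; case: (split_ordP i) => a ->; case: (split_ordP j) => b ->.
  - by rewrite block_mxEul jacL mxE.
  - by rewrite block_mxEur jacL mxE.
  - by rewrite block_mxEdl jacR gD hw1 !mxE.
  - by rewrite block_mxEdr jacR mxE.
pose Hp : 'M[R]_(l + m) := block_mx 1%:M 0 0 H2.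
have Hpsym : Hp^T = Hp by rewrite /Hp tr_block_mx !trmx0 trmx1 H2sym.
have sq0 n (a : 'rV[R]_n) : 0 <= (a *m a^T) 0 0.
  by case: (eqVneq a 0) => [->|ha]; [rewrite mul0mx mxE | exact/ltW/sumsq_gt0].
have Hppos : forall v : 'rV[R]_(l + m), v != 0 -> 0 < (v *m Hp *m v^T) 0 0.
  move=> v nz; rewrite -(hsubmxK v) /Hp mul_row_block tr_row_mx mul_row_col.
  rewrite !mulmx0 mulmx1 addr0 add0r.
  case: (eqVneq (rsubmx v) 0) => hb.
    rewrite hb !mul0mx addr0; apply: sumsq_gt0.
    by apply: contra nz => /eqP ha; rewrite -(hsubmxK v) ha hb row_mx0.
  have addE (X Y : 'M[R]_1) : (X + Y) 0 0 = X 0 0 + Y 0 0 by rewrite mxE.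
  rewrite addE; exact: ltr_wpDl (sq0 _ _) (hconv w _ hb).
have HpJ : (Hp *m jac f w)^T = Hp *m jac f w.
  by rewrite J /Hp mulmx_block !mulmx0 !mul0mx !addr0 add0r tr_block_mx !trmx0 HAsym.
exact: (@sym_diag R _ _ Hp Hpsym Hppos HpJ).
Qed.
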